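(* Let $E$ be an Archimedean vector lattice with a weak unit $u$, let $X$ be a compact Hausdorff space and let $T:E\to S(X)$ be an injective lattice homomorphism such that $T(u)=\mathbf{1}_X$ and the closure, with respect to the supremum norm, of $T(E_u)$ equals $C(X)$, where $E_u$ is the ideal of $E$ generated by $u$ (such $X$ and $T$ exist by Wickstead's representation theorem, and $T$ is this representation). Then $T$ is order continuous and $uo$-continuous (i.e. $x_\alpha\xrightarrow{uo}x$ in $E$ implies $T(x_\alpha)\xrightarrow{uo}T(x)$ in $S(X)$). Moreover $T^{-1}:T(E)\to E$ is $uo$-continuous: if $T(x_\alpha)\xrightarrow{uo}T(x)$ in $S(X)$ then $x_\alpha\xrightarrow{uo}x$ in $E$.
   Context: For a topological space $X$, $S(X)$ is the Archimedean vector lattice of equivalence classes of continuous real-valued functions defined on open dense subsets of $X$ (two functions identified if they agree on the intersection of their domains), with pointwise operations; $C(X)$ is viewed inside $S(X)$ and $\mathbf{1}_X$ is the constant function $1$. A net $(x_\alpha)$ in a vector lattice $E$ converges in order to $x$ if there is a net $u_\gamma\downarrow 0$ such that for each $\gamma$ there is $\alpha_0$ with $|x_\alpha-x|\le u_\gamma$ for $\alpha\ge\alpha_0$; it is $uo$-convergent to $x$ if $|x_\alpha-x|\wedge w$ converges in order to $0$ for every $w\in E_+$. An operator is order continuous if it maps order null nets to order null nets. *)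

(* Defs.v *)
From HB Require Import structures.
From mathcomp Require Import all_boot all_order all_algebra.
From mathcomp Require Import all_classical all_reals all_analysis.
Set Implicit Arguments. Unset Strict Implicit. Unset Printing Implicit Defensive.
Import Order.TTheory GRing.Theory Num.Theory.
Import numFieldNormedType.Exports.
Local Open Scope classical_set_scope.
Local Open Scope ring_scope.

Record VectorLattice (R : realType) := {
  vl_car :> lmodType R;
  vl_le : vl_car -> vl_car -> Prop;
  vl_sup : vl_car -> vl_car -> vl_car;
  vl_inf : vl_car -> vl_car -> vl_car;
  vl_le_refl : forall x, vl_le x x;
  vl_le_trans : forall x y z, vl_le x y -> vl_le y z -> vl_le x z;
  vl_le_anti : forall x y, vl_le x y -> vl_le y x -> x = y;
  vl_le_add : forall x y z, vl_le x y -> vl_le (x + z) (y + z);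
  vl_le_scale : forall (a : R) x y, 0 <= a -> vl_le x y -> vl_le (a *: x) (a *: y);
  vl_sup_ub_l : forall x y, vl_le x (vl_sup x y);
  vl_sup_ub_r : forall x y, vl_le y (vl_sup x y);
  vl_sup_least : forall x y z, vl_le x z -> vl_le y z -> vl_le (vl_sup x y) z;
  vl_inf_lb_l : forall x y, vl_le (vl_inf x y) x;
  vl_inf_lb_r : forall x y, vl_le (vl_inf x y) y;
  vl_inf_greatest : forall x y z, vl_le z x -> vl_le z y -> vl_le z (vl_inf x y)
}.

Section VLdefs.
Variables (R : realType) (E : VectorLattice R).

Definition vl_abs (x : E) : E := vl_sup x (- x).

Definition archimedean_vl : Prop :=
  forall x y : E, vl_le 0 x -> (forall n : nat, vl_le (n%:R *: x) y) -> x = 0.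

Definition weak_unit (u : E) : Prop :=
  vl_le 0 u /\ forall x : E, vl_inf (vl_abs x) u = 0 -> x = 0.

Definition ideal_gen (u : E) : set E :=
  [set x | exists lam : R, vl_le (vl_abs x) (lam *: u)].
End VLdefs.

Definition directed (A : Type) (leA : A -> A -> Prop) : Prop :=
  [/\ inhabited A, (forall a, leA a a),
      (forall a b c, leA a b -> leA b c -> leA a c) &
      (forall a b, exists c, leA a c /\ leA b c)].

Record OSig := {
  os_car :> Type;
  os_le : os_car -> os_car -> Prop;
  os_zero : os_car;
  os_sub : os_car -> os_car -> os_car;
  os_abs : os_car -> os_car;
  os_meet : os_car -> os_car -> os_car
}.

Section Conv.
Variable S : OSig.

Definition decr_to_zero (G : Type) (leG : G -> G -> Prop) (u : G -> S) : Prop :=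
  [/\ directed leG,
      (forall g g', leG g g' -> os_le (u g') (u g)),
      (forall g, os_le (os_zero S) (u g)) &
      (forall w : S, (forall g, os_le w (u g)) -> os_le w (os_zero S))].

Definition ocvg (A : Type) (leA : A -> A -> Prop) (x : A -> S) (l : S) : Prop :=
  exists (G : Type) (leG : G -> G -> Prop) (u : G -> S),
    decr_to_zero leG u /\
    forall g, exists a0, forall a, leA a0 a -> os_le (os_abs (os_sub (x a) l)) (u g).

Definition uocvg (A : Type) (leA : A -> A -> Prop) (x : A -> S) (l : S) : Prop :=
  forall w : S, os_le (os_zero S) w ->
    ocvg leA (fun a => os_meet (os_abs (os_sub (x a) l)) w) (os_zero S).
End Conv.

Definition VL_OSig (R : realType) (E : VectorLattice R) : OSig :=
  {| os_car := E; os_le := @vl_le R E; os_zero := 0;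
     os_sub := fun x y => x - y; os_abs := @vl_abs R E; os_meet := @vl_inf R E |}.

(* is a representative (domain, function); two representatives denote the  *)
(* same element of S(X) iff they agree on the intersection of the domains   *)
(* (sx_eq).  All notions below respect this identification.                 *)
(* Since the domain is open, continuity of the restriction to the domain is *)
(* the same as continuity at every point of the domain.                     *)
Record SX (R : realType) (X : topologicalType) := {
  sdom : set X;
  sfun : X -> R;
  sdom_open : open sdom;
  sdom_dense : dense sdom;
  sfun_cont : forall t, sdom t -> {for t, continuous sfun}
}.

Section SXops.
Variables (R : realType) (X : topologicalType).

Lemma denseT : dense (@setT X).
Proof. by move=> O [t Ot] _; exists t. Qed.

Lemma sx_dom2_open (f g : SX R X) : open (sdom f `&` sdom g).
Proof. exact: openI (sdom_open f) (sdom_open g). Qed.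

Lemma sx_dom2_dense (f g : SX R X) : dense (sdom f `&` sdom g).
Proof. exact: denseI (sdom_open f) (sdom_dense f) (sdom_dense g). Qed.

Definition sx_cst (c : R) : SX R X.
Proof.
refine {| sdom := setT; sfun := fun _ => c; sdom_open := openT;
          sdom_dense := denseT |}.
by move=> t _; exact: cvg_cst.
Defined.

Definition sx_of_cont (h : X -> R) (hc : continuous h) : SX R X.
Proof.
refine {| sdom := setT; sfun := h; sdom_open := openT; sdom_dense := denseT |}.
by move=> t _; exact: hc.
Defined.

Definition sx_lift2 (op : R -> R -> R)
  (opc : forall (f g : X -> R) t, {for t, continuous f} -> {for t, continuous g} ->
           {for t, continuous (fun s => op (f s) (g s))})
  (f g : SX R X) : SX R X.
Proof.
refine {| sdom := sdom f `&` sdom g; sfun := fun s => op (sfun f s) (sfun g s);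
          sdom_open := sx_dom2_open f g; sdom_dense := sx_dom2_dense f g |}.
by move=> t [tf tg]; apply: opc; [exact: sfun_cont tf | exact: sfun_cont tg].
Defined.

Lemma add_cont (f g : X -> R) t : {for t, continuous f} -> {for t, continuous g} ->
  {for t, continuous (fun s => f s + g s)}.
Proof. by move=> cf cg; apply: cvgD. Qed.

Lemma sub_cont (f g : X -> R) t : {for t, continuous f} -> {for t, continuous g} ->
  {for t, continuous (fun s => f s - g s)}.
Proof. by move=> cf cg; apply: cvgB. Qed.

Lemma max_cont (f g : X -> R) t : {for t, continuous f} -> {for t, continuous g} ->
  {for t, continuous (fun s => Num.max (f s) (g s))}.
Proof. by move=> cf cg; exact: (@continuous_max R X f g t cf cg). Qed.

Lemma min_cont (f g : X -> R) t : {for t, continuous f} -> {for t, continuous g} ->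
  {for t, continuous (fun s => Num.min (f s) (g s))}.
Proof. by move=> cf cg; exact: (@continuous_min R X f g t cf cg). Qed.

Definition sx_add := @sx_lift2 (fun a b => a + b) add_cont.
Definition sx_sub := @sx_lift2 (fun a b => a - b) sub_cont.
Definition sx_join := @sx_lift2 (fun a b => Num.max a b) max_cont.
Definition sx_meet := @sx_lift2 (fun a b => Num.min a b) min_cont.

Definition sx_scale (a : R) (f : SX R X) : SX R X.
Proof.
refine {| sdom := sdom f; sfun := fun s => a * sfun f s;
          sdom_open := sdom_open f; sdom_dense := sdom_dense f |}.
by move=> t tf; apply: cvgM; [exact: cvg_cst | exact: sfun_cont tf].
Defined.

Definition sx_abs (f : SX R X) : SX R X.
Proof.
refine {| sdom := sdom f; sfun := fun s => `|sfun f s|;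
          sdom_open := sdom_open f; sdom_dense := sdom_dense f |}.
by move=> t tf; apply: cvg_norm; exact: sfun_cont tf.
Defined.

Definition sx_le (f g : SX R X) : Prop :=
  forall t, sdom f t -> sdom g t -> sfun f t <= sfun g t.

Definition sx_eq (f g : SX R X) : Prop :=
  forall t, sdom f t -> sdom g t -> sfun f t = sfun g t.

Definition in_CX (f : SX R X) : Prop :=
  exists (h : X -> R) (hc : continuous h), sx_eq f (sx_of_cont hc).

Definition in_sup_closure (A : set (SX R X)) (f : SX R X) : Prop :=
  forall eps : R, 0 < eps ->
    exists g, A g /\ sx_le (sx_abs (sx_sub f g)) (sx_cst eps).
End SXops.

Definition SX_OSig (R : realType) (X : topologicalType) : OSig :=
  {| os_car := SX R X; os_le := @sx_le R X; os_zero := sx_cst X 0;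
     os_sub := @sx_sub R X; os_abs := @sx_abs R X; os_meet := @sx_meet R X |}.

Definition lattice_hom (R : realType) (E : VectorLattice R) (X : topologicalType)
  (T : E -> SX R X) : Prop :=
  [/\ forall x y : E, sx_eq (T (x + y)) (sx_add (T x) (T y)),
      forall (a : R) (x : E), sx_eq (T (a *: x)) (sx_scale a (T x)) &
      forall x y : E, sx_eq (T (vl_sup x y)) (sx_join (T x) (T y))].

Definition sx_injective (R : realType) (E : VectorLattice R) (X : topologicalType)
  (T : E -> SX R X) : Prop :=
  forall x y : E, sx_eq (T x) (T y) -> x = y.

(* Main.v *)
Require Import Defs.
From HB Require Import structures.
From mathcomp Require Import all_boot all_order all_algebra.
From mathcomp Require Import all_classical all_reals all_analysis.
From mathcomp Require Import lra.
Require Import Defs.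
Set Implicit Arguments. Unset Strict Implicit. Unset Printing Implicit Defensive.
Import Order.TTheory GRing.Theory Num.Theory.
Import numFieldNormedType.Exports.
Local Open Scope classical_set_scope.
Local Open Scope ring_scope.


Section Topo.
Variables (R : realType) (X : topologicalType).

Lemma dense_meet (D N : set X) (t : X) : open D -> dense D -> nbhs t N ->
  exists s, D s /\ N s.
Proof.
move=> oD dD; rewrite nbhsE => -[B [oB Bt] BN].
have [|s [Bs Ds]] := dD B _ oB; first by exists t.
by exists s; split => //; apply: BN.
Qed.

Lemma ext_le_at (phi : X -> R) (t : X) (D N : set X) :
  {for t, continuous phi} -> open D -> dense D -> nbhs t N ->
  (forall s, D s -> N s -> phi s <= 0) -> phi t <= 0.
Proof.
move=> cphi oD dD Nt H; rewrite leNgt; apply/negP => pos.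
have P : \forall s \near t, 0 < phi s by apply: (cvgr_gt (phi t)) => //.
have [s [Ds [/= Ps Ns]]] := dense_meet oD dD (filterI P Nt).
by have := H s Ds Ns; rewrite leNgt Ps.
Qed.

Lemma open_nbhs_of (A : set X) (t : X) : open A -> A t -> nbhs t A.
Proof. by move=> oA At; apply: open_nbhs_nbhs. Qed.

Fixpoint doms (l : seq (SX R X)) : set X :=
  match l with [::] => setT | f :: l' => sdom f `&` doms l' end.

Lemma doms_od l : open (doms l) /\ dense (doms l).
Proof.
elim: l => [|f l [oD dD]] /=; first by split; [exact: openT | exact: denseT].
split; first exact: openI (sdom_open f) oD.
exact: denseI (sdom_open f) (sdom_dense f) dD.
Qed.

Lemma ext_le (f g : SX R X) (D : set X) : open D -> dense D ->
  (forall s, D s -> sdom f s -> sdom g s -> sfun f s <= sfun g s) -> sx_le f g.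
Proof.
move=> oD dD H t ft gt; rewrite -subr_le0.
apply: (@ext_le_at (fun s => sfun f s - sfun g s) t D (sdom f `&` sdom g)) => //.
- by apply: sub_cont; apply: sfun_cont.
- by apply: open_nbhs_of; [exact: openI (sdom_open f) (sdom_open g)|].
by move=> s Ds [fs gs]; rewrite subr_le0; apply: H.
Qed.

Lemma sx_le_trans (f g h : SX R X) : sx_le f g -> sx_le g h -> sx_le f h.
Proof.
move=> fg gh; apply: (@ext_le _ _ (sdom g) (sdom_open g) (sdom_dense g)).
by move=> s gs fs hs; apply: le_trans (fg s fs gs) (gh s gs hs).
Qed.

Lemma ext_eq_at (phi psi : X -> R) (t : X) (D N : set X) :
  {for t, continuous phi} -> {for t, continuous psi} -> open D -> dense D -> nbhs t N ->
  (forall s, D s -> N s -> phi s = psi s) -> phi t = psi t.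
Proof.
move=> cphi cpsi oD dD Nt H.
have c1 : {for t, continuous (fun s => phi s - psi s)} by exact: sub_cont.
have c2 : {for t, continuous (fun s => psi s - phi s)} by exact: sub_cont.
have h1 := ext_le_at c1 oD dD Nt.
have h2 := ext_le_at c2 oD dD Nt.
have /= h1' : phi t - psi t <= 0 by apply: h1 => s Ds Ns; rewrite (H s Ds Ns) subrr.
have /= h2' : psi t - phi t <= 0 by apply: h2 => s Ds Ns; rewrite (H s Ds Ns) subrr.
lra.
Qed.

Lemma open_lt (f : SX R X) (c : R) : open [set s | sdom f s /\ sfun f s < c].
Proof.
rewrite openE => t [ft fc]; rewrite /interior.
apply: filterI; first exact: open_nbhs_of (sdom_open f) ft.
by apply: (cvgr_lt (sfun f t)) => //; apply: sfun_cont.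
Qed.

Lemma open_gt (f : SX R X) (c : R) : open [set s | sdom f s /\ c < sfun f s].
Proof.
rewrite openE => t [ft fc]; rewrite /interior.
apply: filterI; first exact: open_nbhs_of (sdom_open f) ft.
by apply: (cvgr_gt (sfun f t)) => //; apply: sfun_cont.
Qed.

End Topo.


Section ELemmas.
Variables (R : realType) (E : VectorLattice R).
Implicit Types x y z a b s : E.

Lemma e1 x y s : x - (x + y - s) = s - y.
Proof. by rewrite opprB addrCA opprD addNKr. Qed.
Lemma e2 x y s : y - (x + y - s) = s - x.
Proof. by rewrite opprB addrCA [x + y]addrC opprD addNKr. Qed.
Lemma e3 x y z : x + y - z - x = y - z.
Proof. by rewrite addrAC [x + y]addrC addrK. Qed.
Lemma e4 x y z : x + y - z - y = x - z.
Proof. by rewrite addrAC addrK. Qed.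

Lemma vl_le_sub0 a b : vl_le a b <-> vl_le 0 (b - a).
Proof.
split => [ab|h]; first by have := vl_le_add (- a) ab; rewrite subrr.
by have := vl_le_add a h; rewrite add0r addrNK.
Qed.

Lemma sub0_ge a b : vl_le a b -> vl_le 0 (b - a).
Proof. by case: (vl_le_sub0 a b). Qed.
Lemma sub0_le a b : vl_le 0 (b - a) -> vl_le a b.
Proof. by case: (vl_le_sub0 a b). Qed.

Lemma vl_sup_r x y : vl_le x y -> vl_sup x y = y.
Proof.
move=> xy; apply: vl_le_anti; first exact: vl_sup_least (vl_le_refl y).
exact: vl_sup_ub_r.
Qed.

Lemma vl_inf_eq x y : vl_inf x y = x + y - vl_sup x y.
Proof.
have m1 : vl_le (x + y - vl_sup x y) x.
  by apply: sub0_le; rewrite e1; apply: sub0_ge; apply: vl_sup_ub_r.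
have m2 : vl_le (x + y - vl_sup x y) y.
  by apply: sub0_le; rewrite e2; apply: sub0_ge; apply: vl_sup_ub_l.
apply: vl_le_anti; last exact: vl_inf_greatest.
set z := vl_inf x y.
have s1 : vl_le (vl_sup x y) (x + y - z).
  apply: vl_sup_least; apply: sub0_le; [rewrite e3|rewrite e4]; apply: sub0_ge.
    exact: vl_inf_lb_r.
  exact: vl_inf_lb_l.
apply: sub0_le; rewrite addrAC; apply: sub0_ge; exact: s1.
Qed.

Lemma vl_le_scale_inv (c : R) x y : 0 < c -> vl_le (c *: x) (c *: y) -> vl_le x y.
Proof.
move=> c0 h; have ci : 0 <= c^-1 by rewrite invr_ge0 ltW.
have := vl_le_scale ci h.
by rewrite !scalerA mulVf ?gt_eqF // !scale1r.
Qed.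
End ELemmas.


Section Doms.
Variables (R : realType) (X : topologicalType).

Lemma doms_nbhs (l : seq (SX R X)) t : doms l t -> nbhs t (doms l).
Proof. by move=> h; apply: open_nbhs_of => //; exact: (doms_od l).1. Qed.

Lemma ext_eq_doms (phi psi : X -> R) t (l1 l2 : seq (SX R X)) :
  {for t, continuous phi} -> {for t, continuous psi} -> doms l1 t ->
  (forall s, doms l1 s -> doms l2 s -> phi s = psi s) -> phi t = psi t.
Proof.
move=> c1 c2 h H; have [oD dD] := doms_od l2.
apply: (ext_eq_at c1 c2 oD dD (doms_nbhs h)) => s Ds Ns; exact: H.
Qed.

Lemma ext_le_doms (phi psi : X -> R) t (l1 l2 : seq (SX R X)) :
  {for t, continuous phi} -> {for t, continuous psi} -> doms l1 t ->
  (forall s, doms l1 s -> doms l2 s -> phi s <= psi s) -> phi t <= psi t.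
Proof.
move=> c1 c2 h H; have [oD dD] := doms_od l2.
have c3 : {for t, continuous (fun s => phi s - psi s)} by exact: sub_cont.
have := ext_le_at c3 oD dD (doms_nbhs h); rewrite subr_le0; apply => s Ds Ns.
by rewrite subr_le0; exact: H.
Qed.

Lemma ext_le_l (f g : SX R X) (l : seq (SX R X)) :
  (forall s, doms l s -> sdom f s -> sdom g s -> sfun f s <= sfun g s) -> sx_le f g.
Proof. by have [oD dD] := doms_od l; apply: ext_le. Qed.

End Doms.

Section TL.
Variables (R : realType) (E : VectorLattice R) (X : topologicalType) (T : E -> SX R X).
Hypothesis Hhom : lattice_hom T.
Hypothesis Hinj : sx_injective T.
Implicit Types x y z : E.

Local Notation Tf x := (sfun (T x)).
Local Notation Td x := (sdom (T x)).

Lemma Tcont x s : Td x s -> {for s, continuous (Tf x)}.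
Proof. exact: sfun_cont. Qed.

Lemma Tadd x y s : Td (x + y) s -> Td x s -> Td y s -> Tf (x + y) s = Tf x s + Tf y s.
Proof. by case: Hhom => H _ _ h1 h2 h3; apply: H => //; split. Qed.

Lemma Tscale a x s : Td (a *: x) s -> Td x s -> Tf (a *: x) s = a * Tf x s.
Proof. by case: Hhom => _ H _ h1 h2; apply: H. Qed.

Lemma Tsup x y s : Td (vl_sup x y) s -> Td x s -> Td y s ->
  Tf (vl_sup x y) s = Num.max (Tf x s) (Tf y s).
Proof. by case: Hhom => _ _ H h1 h2 h3; apply: H => //; split. Qed.

Lemma T0 s : Td 0 s -> Tf 0 s = 0.
Proof.
move=> h; have := @Tscale 0 0 s; rewrite scale0r => /(_ h h) ->; by rewrite mul0r.
Qed.

Lemma Topp x s : Td (- x) s -> Td x s -> Tf (- x) s = - Tf x s.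
Proof.
move=> h1 h2; have := @Tscale (-1) x s; rewrite scaleN1r => /(_ h1 h2) ->.
by rewrite mulN1r.
Qed.

Lemma Tsub x y s : Td (x - y) s -> Td x s -> Td y s -> Tf (x - y) s = Tf x s - Tf y s.
Proof.
move=> h1 h2 h3.
apply: (@ext_eq_doms _ _ (Tf (x - y)) (fun s => Tf x s - Tf y s) s [:: T (x - y); T x; T y] [:: T (- y)]).
- exact: Tcont.
- by apply: sub_cont; exact: Tcont.
- by do ![split => //].
move=> s' [d1 [d2 [d3 _]]] [d4 _].
by rewrite Tadd // Topp.
Qed.

Lemma Tabs x s : Td (vl_abs x) s -> Td x s -> Tf (vl_abs x) s = `|Tf x s|.
Proof.
move=> h1 h2.
apply: (@ext_eq_doms _ _ (Tf (vl_abs x)) (fun s => `|Tf x s|) s [:: T (vl_abs x); T x] [:: T (- x)]).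
- exact: Tcont.
- by apply: cvg_norm; exact: Tcont.
- by do ![split => //].
move=> s' [d1 [d2 _]] [d4 _].
rewrite /vl_abs in d1 *; rewrite Tsup // Topp //.
by case: (ler0P (Tf x s')) => h; case: (lerP (Tf x s') (- Tf x s')) => h'; lra.
Qed.

Lemma Tinf x y s : Td (vl_inf x y) s -> Td x s -> Td y s ->
  Tf (vl_inf x y) s = Num.min (Tf x s) (Tf y s).
Proof.
move=> h1 h2 h3.
apply: (@ext_eq_doms _ _ (Tf (vl_inf x y)) (fun s => Num.min (Tf x s) (Tf y s)) s [:: T (vl_inf x y); T x; T y]
   [:: T (x + y); T (vl_sup x y)]).
- exact: Tcont.
- by apply: min_cont; exact: Tcont.
- by do ![split => //].
move=> s' [d1 [d2 [d3 _]]] [d4 [d5 _]].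
rewrite vl_inf_eq in d1 *; rewrite Tsub // Tadd // Tsup //.
by case: (lerP (Tf x s') (Tf y s')) => h; lra.
Qed.

Lemma Tmono x y s : vl_le x y -> Td x s -> Td y s -> Tf x s <= Tf y s.
Proof.
move=> xy hx hy; have h := @Tsup x y s; rewrite (vl_sup_r xy) in h.
by rewrite (h hy hx hy) le_max lexx.
Qed.

Lemma Tpos x s : vl_le 0 x -> Td x s -> 0 <= Tf x s.
Proof.
move=> x0 hx.
apply: (@ext_le_doms _ _ (fun _ => 0) (Tf x) s [:: T x] [:: T 0]).
- exact: cvg_cst.
- exact: Tcont.
- by do ![split => //].
move=> s' [d1 _] [d2 _]; rewrite -(T0 d2); exact: Tmono.
Qed.

Lemma Tle x y : vl_le x y -> sx_le (T x) (T y).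
Proof. by move=> xy s; apply: Tmono. Qed.

Lemma Treflect x y : sx_le (T x) (T y) -> vl_le x y.
Proof.
move=> h; suff <- : vl_sup x y = y by apply: vl_sup_ub_l.
apply: Hinj => t d1 d2.
apply: (@ext_eq_doms _ _ (Tf (vl_sup x y)) (Tf y) t [:: T (vl_sup x y); T y] [:: T x]).
- exact: Tcont.
- exact: Tcont.
- by do ![split => //].
move=> s' [e1 [e2 _]] [e3 _]; rewrite Tsup // max_r //; exact: h.
Qed.


Variable u : E.
Hypothesis Hu : sx_eq (T u) (sx_cst X 1).
Hypothesis Hcl : forall f : SX R X, in_sup_closure (T @` ideal_gen u) f <-> in_CX f.
Hypothesis Hcomp : compact [set: X].
Hypothesis Hhaus : hausdorff_space X.

Lemma Tu s : Td u s -> Tf u s = 1.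
Proof. by move=> h; apply: Hu. Qed.

Lemma key (w : SX R X) (O : set X) t0 : open O -> O t0 -> sdom w t0 -> 0 < sfun w t0 ->
  exists v : E, [/\ vl_le 0 v, v <> 0,
    (forall s, Td v s -> sdom w s -> Tf v s <= Num.max (sfun w s) 0) &
    (forall s, Td v s -> ~ O s -> Tf v s <= 0)].
Proof.
move=> oO Ot0 wt0 c0.
have [c cE] : {c | c = sfun w t0} by exists (sfun w t0).
rewrite -cE in c0.
set U := O `&` [set s | sdom w s /\ c / 2 < sfun w s].
have oU : open U := openI oO (open_gt w (c/2)).
have Ut0 : U t0 by split => //; split => //; rewrite -cE; lra.
have nX : normal_space X := compact_normal Hhaus Hcomp.
have cA : closed (~` U) := open_closedC oU.
have cB : closed [set t0] := @accessible_closed_set1 X (hausdorff_accessible Hhaus) t0.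
have AB : ~` U `&` [set t0] = set0.
  by rewrite -subset0 => x [nUx x0]; apply: nUx; rewrite x0.
have [f [cf f01 fA fB]] := (@uniform_separatorP X R (~` U) [set t0]).1
   ((@normal_separatorP R X).1 nX _ _ cA cB AB).
have f0 : forall s, ~ U s -> f s = 0 by move=> s nUs; by apply: fA; exists s.
have f1 : f t0 = 1 by apply: fB; exists t0.
have fle1 : forall s, f s <= 1.
  move=> s; have := f01 _ (imageT f s); rewrite /= in_itv /= => /andP[_ ->] //.
pose hf := fun s => c / 2 * f s.
have hc : continuous hf by move=> s; apply: cvgM; [exact: cvg_cst | exact: cf].
have inC : in_CX (sx_of_cont hc) by exists hf, hc => s _ _.
have c8 : 0 < c / 8 by lra.
have [g [[e [lam He] <-] Hg]] := (Hcl (sx_of_cont hc)).2 inC (c/8) c8.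
have Heb : forall s, Td e s -> `|hf s - Tf e s| <= c / 8.
  by move=> s de; exact: (Hg s (conj I de) I).
pose v := vl_sup (e + (- (c/4)) *: u) 0.
pose Dl := [:: T v; T (e + (- (c/4)) *: u); T e; T ((- (c/4)) *: u); T u; T 0].
have Tv : forall s, doms Dl s -> Tf v s = Num.max (Tf e s - c/4) 0.
  move=> s [d1 [d2 [d3 [d4 [d5 [d6 _]]]]]].
  by rewrite Tsup // T0 // Tadd // Tscale // Tu // mulr1.
have [oD dD] := doms_od Dl.
exists v; split.
- exact: vl_sup_ub_r.
- move=> v0.
  have N : nbhs t0 [set s | c * 3 / 8 < hf s].
    apply: (cvgr_gt (hf t0)); first exact: hc.
    rewrite /hf f1; lra.
  have [s [Ds Ns]] := dense_meet oD dD N.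
  have := Tv s Ds; move: Ds => [d1 [d2 [d3 _]]].
  have := Heb s d3; rewrite /= in Ns.
  have -> : Tf v s = 0 by rewrite v0 T0 // -v0.
  rewrite ler_norml => /andP[h1 h2].
  by case: (lerP (Tf e s - c/4) 0) => h3; lra.
- move=> s dv dw.
  apply: (@ext_le_doms _ _ (Tf v) (fun s => Num.max (sfun w s) 0) s [:: T v; w] Dl).
  + exact: Tcont.
  + by apply: max_cont; [exact: sfun_cont | exact: cvg_cst].
  + by do ![split => //].
  move=> s' [e1 [e2 _]] Ds; rewrite Tv //.
  move: Ds => [_ [_ [d3 _]]].
  have := Heb s' d3; rewrite ler_norml => /andP[h1 h2].
  have [Us|nUs] := pselect (U s').
    have [_ [_ ws]] := Us; have := fle1 s'; rewrite /hf in h1 h2 => fl.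
    have : c / 2 * f s' <= c / 2 by rewrite -[X in _ <= X]mulr1 ler_wpM2l //; lra.
    by case: (lerP (Tf e s' - c/4) 0) => h3; case: (lerP (sfun w s') 0) => h4; lra.
  rewrite /hf f0 // mulr0 in h1 h2.
  by case: (lerP (Tf e s' - c/4) 0) => h3; case: (lerP (sfun w s') 0) => h4; lra.
- move=> s dv nO.
  have nU : ~ U s by case.
  have N : nbhs s (Td v `&` [set s' | hf s' < c / 8]).
    apply: filterI; first exact: open_nbhs_of (sdom_open _) dv.
    apply: (cvgr_lt (hf s)); first exact: hc.
    by rewrite /hf f0 // mulr0.
  have c1 : {for s, continuous (fun s' => Tf v s' - 0)}.
    by apply: sub_cont; [exact: Tcont | exact: cvg_cst].
  have := ext_le_at c1 oD dD N; rewrite subr0; apply => s' Ds [_ Ns].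
  rewrite subr0 Tv //; move: Ds => [_ [_ [d3 _]]].
  have := Heb s' d3; rewrite ler_norml => /andP[h1 h2]; rewrite /= in Ns.
  by case: (lerP (Tf e s' - c/4) 0) => h3; lra.
Qed.


Lemma Tuo y l e s : doms [:: T (vl_abs (vl_inf (vl_abs (y - l)) e)); T (vl_inf (vl_abs (y - l)) e);
   T (vl_abs (y - l)); T (y - l); T y; T l; T e] s ->
  Tf (vl_abs (vl_inf (vl_abs (y - l)) e)) s = `|Num.min `|Tf y s - Tf l s| (Tf e s)|.
Proof.
move=> [d1 [d2 [d3 [d4 [d5 [d6 [d7 _]]]]]]].
by rewrite Tabs // Tinf // Tabs // Tsub.
Qed.

Lemma pos_point (w : SX R X) : ~ sx_le w (sx_cst X 0) ->
  exists t, sdom w t /\ 0 < sfun w t.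
Proof.
move=> nle; apply: contrapT => nex; apply: nle => t wt _ /=.
by rewrite leNgt; apply/negP => pos; apply: nex; exists t.
Qed.

Lemma Tinf0 (G : Type) (leG : G -> G -> Prop) (z : G -> E) :
  decr_to_zero (S := VL_OSig E) leG z ->
  decr_to_zero (S := SX_OSig R X) leG (fun g => T (z g)).
Proof.
case=> dG dec pos inf; split => //.
- move=> g g' gg'; exact: Tle (dec g g' gg').
- by move=> g s _ ds; exact: Tpos (pos g) ds.
move=> w /= Hw; apply: contrapT => /pos_point [t [wt wpos]].
have [v [v0 vn0 vle _]] := key (O := setT) openT I wt wpos.
apply: vn0; apply: vl_le_anti v0.
apply: inf => g /=; apply: Treflect.
apply: (@ext_le_l _ _ _ _ [:: w]) => s [ws _] dv dz.
have := vle s dv ws; have := Hw g s ws dz; have := Tpos (pos g) dz.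
by case: (lerP (sfun w s) 0) => h1; lra.
Qed.

Lemma part1 (A : Type) (leA : A -> A -> Prop) (x : A -> E) :
  directed leA -> ocvg (S := VL_OSig E) leA x 0 ->
  ocvg (S := SX_OSig R X) leA (fun a => T (x a)) (sx_cst X 0).
Proof.
move=> _ [G [leG [z [dz Hz]]]]; exists G, leG, (fun g => T (z g)); split.
  exact: Tinf0.
move=> g; have [a0 Ha] := Hz g; exists a0 => a aa; have /= h := Ha a aa.
rewrite subr0 in h; move=> s /= [dx _] dzs.
apply: (@ext_le_doms _ _ (fun s => `|sfun (T (x a)) s - 0|) (Tf (z g)) s
   [:: T (x a); T (z g)] [:: T (vl_abs (x a))]).
- by apply: cvg_norm; apply: sub_cont; [exact: Tcont | exact: cvg_cst].
- exact: Tcont.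
- by do ![split => //].
move=> s' [e1 [e2 _]] [e3 _]; rewrite subr0 -Tabs //; exact: (@Tmono (vl_abs (x a)) (z g) s' h e3 e2).
Qed.

Hypothesis Harch : archimedean_vl E.

Lemma part3 (A : Type) (leA : A -> A -> Prop) (x : A -> E) (l : E) :
  directed leA -> uocvg (S := SX_OSig R X) leA (fun a => T (x a)) (T l) ->
  uocvg (S := VL_OSig E) leA x l.
Proof.
move=> [[a00] _ leAt leAd] Hx e /= e0.
have Te0 : sx_le (sx_cst X 0) (T e) by move=> s _ ds; exact: Tpos e0 ds.
have [H [leH [d [[dH ddec dpos dinf] Hd]]]] := Hx (T e) Te0.
pose pE := fun a => vl_abs (vl_inf (vl_abs (x a - l)) e - 0).
have TpE : forall a s, Td (pE a) s -> Td e s -> Td (x a) s -> Td l s ->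
    Tf (pE a) s = `|Num.min `|Tf (x a) s - Tf l s| (Tf e s)|.
  move=> a s h1 h2 h3 h4; rewrite /pE subr0 in h1 *.
  apply: (@ext_eq_doms _ _ (Tf (vl_abs (vl_inf (vl_abs (x a - l)) e)))
     (fun s => `|Num.min `|Tf (x a) s - Tf l s| (Tf e s)|) s
     [:: T (vl_abs (vl_inf (vl_abs (x a - l)) e)); T e; T (x a); T l]
     [:: T (vl_inf (vl_abs (x a - l)) e); T (vl_abs (x a - l)); T (x a - l)]).
  - exact: Tcont.
  - have c1 : {for s, continuous (fun s => `|Tf (x a) s - Tf l s|)}.
      by apply: cvg_norm; apply: sub_cont; exact: Tcont.
    have c2 := min_cont c1 (Tcont h2).
    exact: cvg_norm c2.
  - by do ![split => //].
  move=> s' [f1 [f2 [f6 [f7 _]]]] [f3 [f4 [f5 _]]]; apply: Tuo.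
  by do ![split => //].
have pEe : forall a, vl_le (pE a) e.
  move=> a; apply: Treflect.
  apply: (@ext_le_l _ _ _ _ [:: T (x a); T l]) => s [d1 [d2 _]] dp de.
  rewrite TpE //; have := Tpos e0 de.
  case: (lerP `|Tf (x a) s - Tf l s| (Tf e s)) => h1 h2; rewrite ger0_norm //; lra.
pose G' := {b : E | vl_le 0 b /\ exists a0, forall a, leA a0 a -> vl_le (pE a) b}.
have eG : vl_le 0 e /\ exists a0, forall a, leA a0 a -> vl_le (pE a) e.
  by split => //; exists a00 => a _; exact: pEe.
exists G', (fun b1 b2 : G' => vl_le (sval b2) (sval b1)), (fun b : G' => sval b).
split; last first.
  by move=> [b [b0 [a0 e1]]]; exists a0 => a h; exact: e1 a h.
split => //=.
- split.
  + by constructor; exists e.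
  + by move=> b; exact: vl_le_refl.
  + by move=> b1 b2 b3 h12 h23; exact: vl_le_trans h23 h12.
  move=> [b1 [p1 [a1 e1]]] [b2 [p2 [a2 e2]]].
  have P3 : vl_le 0 (vl_inf b1 b2) /\ exists a0, forall a, leA a0 a -> vl_le (pE a) (vl_inf b1 b2).
    split; first exact: vl_inf_greatest.
    have [a3 [h13 h23]] := leAd a1 a2; exists a3 => a h.
    apply: vl_inf_greatest; [exact: e1 (leAt _ _ _ h13 h) | exact: e2 (leAt _ _ _ h23 h)].
  pose c3 : G' := exist _ (vl_inf b1 b2) P3.
  refine (ex_intro _ c3 _); split; [exact: vl_inf_lb_l | exact: vl_inf_lb_r].
- by move=> b; exact: (proj1 (proj2_sig b)).
move=> q /= Hq.
set qp := vl_sup q 0.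
suff h : sx_le (T qp) (sx_cst X 0).
  apply: vl_le_trans (vl_sup_ub_l q 0) _; apply: Treflect.
  by move=> s dq d0; rewrite T0 //; exact: h s dq I.
apply: dinf => hh; apply: contrapT => nle.
have nr : ~ sx_le (sx_sub (T qp) (d hh)) (sx_cst X 0).
  move=> hr; apply: nle => s d1 d2; have := hr s (conj d1 d2) I.
  by rewrite /= subr_le0.
have [t [dr rpos]] := pos_point nr.
have [v [v0 vn0 vle _]] := key (O := setT) openT I dr rpos.
have dpos' : forall s, sdom (d hh) s -> 0 <= sfun (d hh) s.
  by move=> s ds; exact: dpos hh s I ds.
have qp0 : vl_le 0 qp by exact: vl_sup_ub_r.
have vq : vl_le v qp.
  apply: Treflect; apply: (@ext_le_l _ _ _ _ [:: d hh]) => s [dd _] dv dq.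
  have := vle s dv (conj dq dd); have := dpos' s dd; have := Tpos qp0 dq.
  by rewrite /=; case: (lerP (Tf qp s - sfun (d hh) s) 0) => h1; lra.
have step : forall b : E, (vl_le 0 b /\ exists a0, forall a, leA a0 a -> vl_le (pE a) b) ->
    (vl_le 0 (b - v) /\ exists a0, forall a, leA a0 a -> vl_le (pE a) (b - v)).
  move=> b bG; have qb : vl_le qp b.
    by apply: vl_sup_least; [exact: (Hq (exist _ b bG)) | exact: (proj1 bG)].
  have [b0 [a1 e1]] := bG.
  split; first exact: sub0_ge (vl_le_trans vq qb).
  have [a2 e2] := Hd hh; have [a3 [h13 h23]] := leAd a1 a2; exists a3 => a h.
  have e1' := e1 a (leAt _ _ _ h13 h); have e2' := e2 a (leAt _ _ _ h23 h).
  apply: Treflect.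
  apply: (@ext_le_l _ _ _ _ [:: T (x a); T l; T e; T b; T v; d hh; T qp]).
  move=> s [f1 [f2 [f3 [f4 [f5 [f6 [f7 _]]]]]]] dp dbv.
  rewrite TpE // Tsub //.
  have := e2' s (conj (conj (conj f1 f2) f3) I) f6; rewrite /= subr0 => hP.
  have := Tmono e1' dp f4; rewrite TpE // => hb.
  have := vle s f5 (conj f7 f6) => /= hv.
  have := Tmono qb f7 f4 => hqb.
  have := Tpos v0 f5 => hv0.
  by move: hv; case: (lerP (Tf qp s - sfun (d hh) s) 0) => h1; lra.
have alln : forall n : nat, (vl_le 0 (e - n%:R *: v) /\ exists a0, forall a, leA a0 a -> vl_le (pE a) (e - n%:R *: v)).
  elim => [|n IH]; first by rewrite scale0r subr0.
  have := step _ IH.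
  by rewrite -natr1 scalerDl scale1r opprD addrA.
apply: vn0; apply: (Harch (x := v) (y := e - q) v0) => n.
have := Hq (exist _ _ (alln n)); rewrite /= => h.
apply: sub0_le; rewrite addrAC; exact: sub0_ge h.
Qed.

Hypothesis Hu0 : vl_le 0 u.

Lemma part2 (A : Type) (leA : A -> A -> Prop) (x : A -> E) (l : E) :
  directed leA -> uocvg (S := VL_OSig E) leA x l ->
  uocvg (S := SX_OSig R X) leA (fun a => T (x a)) (T l).
Proof.
move=> [[a00] _ leAt leAd] Hx W /= W0.
have W0' : forall s, sdom W s -> 0 <= sfun W s by move=> s ds; exact: W0 s I ds.
have [G [leG [z [[dG zdec zpos zinf] Hz]]]] := Hx u Hu0.
pose P := fun a => sx_abs (sx_sub (sx_meet (sx_abs (sx_sub (T (x a)) (T l))) W) (sx_cst X 0)).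
pose G' := {d : SX R X | sx_le (sx_cst X 0) d /\ exists a0, forall a, leA a0 a -> sx_le (P a) d}.
have WG : sx_le (sx_cst X 0) W /\ exists a0, forall a, leA a0 a -> sx_le (P a) W.
  split => //; exists a00 => a _ s /= [[[d1 d2] d3] _] d4.
  have := W0' s d4.
  by case: (lerP `|sfun (T (x a)) s - sfun (T l) s| (sfun W s)) => h1 h2;
    rewrite subr0 ger0_norm //; lra.
exists G', (fun d1 d2 : G' => sx_le (sval d2) (sval d1)), (fun d : G' => sval d).
split; last first.
  by move=> [d [d0 [a0 e1]]]; exists a0 => a h; exact: e1 a h.
split => //=.
- split.
  + by constructor; exists W.
  + by move=> d s h _; exact: lexx.
  + by move=> d1 d2 d3 h12 h23; exact: sx_le_trans h23 h12.
  move=> [d1 [p1 [a1 e1]]] [d2 [p2 [a2 e2]]].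
  have P3 : sx_le (sx_cst X 0) (sx_meet d1 d2) /\ exists a0, forall a, leA a0 a -> sx_le (P a) (sx_meet d1 d2).
    split.
      move=> s _ [s1 s2] /=; rewrite le_min; apply/andP; split.
        exact: p1 s I s1.
      exact: p2 s I s2.
    have [a3 [h13 h23]] := leAd a1 a2; exists a3 => a h.
    move=> s dP [s1 s2]; rewrite /= le_min; apply/andP; split.
      exact: (e1 a (leAt _ _ _ h13 h) s dP s1).
    exact: (e2 a (leAt _ _ _ h23 h) s dP s2).
  pose c3 : G' := exist _ (sx_meet d1 d2) P3.
  refine (ex_intro _ c3 _); split => s [s1 s2] _ /=; rewrite ge_min lexx ?orbT //.
- by move=> d; exact: (proj1 (proj2_sig d)).
move=> q /= Hq; apply: contrapT => /pos_point [t [qt qpos]].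
have Nq : nbhs t [set s | sdom q s /\ 0 < sfun q s].
  by apply: open_nbhs_of => //; exact: open_gt.
have [s [Ws [qs qspos]]] := dense_meet (sdom_open W) (sdom_dense W) Nq.
pose c := Num.max 1 (sfun W s + 1).
have c1 : 1 <= c by rewrite le_max lexx.
have cW : sfun W s < c.
  by rewrite /c; case: (lerP 1 (sfun W s + 1)) => h; lra.
pose O := [set s' | sdom W s' /\ sfun W s' < c].
have [v [v0 vn0 vle vout]] := key (O := O) (open_lt W c) (conj Ws cW) qs qspos.
have Hg : forall g, vl_le v (c *: z g).
  move=> g.
  pose dg := sx_add (sx_scale c (T (z g))) (sx_join (sx_sub W (sx_cst X c)) (sx_cst X 0)).
  have dgG : sx_le (sx_cst X 0) dg /\ exists a0, forall a, leA a0 a -> sx_le (P a) dg.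
    split.
      move=> s' _ [dz [[dW _] _]] /=.
      have := Tpos (zpos g) dz => hz.
      have : 0 <= c * Tf (z g) s' by apply: mulr_ge0 => //; lra.
      by case: (lerP (sfun W s' - c) 0) => h; lra.
    have [a0 Ha] := Hz g; exists a0 => a h.
    have /= Hza := Ha a h; rewrite subr0 in Hza.
    apply: (@ext_le_l _ _ _ _ [:: T (x a); T l; T u; T (z g); W;
      T (vl_abs (vl_inf (vl_abs (x a - l)) u)); T (vl_inf (vl_abs (x a - l)) u);
      T (vl_abs (x a - l)); T (x a - l)]).
    move=> s' [f1 [f2 [f3 [f4 [f5 [f6 [f7 [f8 [f9 _]]]]]]]]] _ _ /=.
    have := Tmono Hza f6 f4; rewrite Tuo; last by do ![split => //].
    rewrite Tu // => hm.
    have hW := W0' s' f5.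
    have hz := Tpos (zpos g) f4.
    set al := `|sfun (T (x a)) s' - sfun (T l) s'|.
    have al0 : 0 <= al by exact: normr_ge0.
    rewrite -/al in hm.
    have hcm : c * Num.min al 1 <= c * Tf (z g) s'.
      apply: ler_wpM2l; first lra.
      by move: hm; rewrite ger0_norm // le_min al0 ler01.
    move: hcm; rewrite subr0.
    case: (lerP al 1) => h1; case: (lerP al (sfun W s')) => h2;
      case: (lerP (sfun W s' - c) 0) => h3 hcm; rewrite ger0_norm //; nra.
  have hq := Hq (exist _ dg dgG).
  apply: Treflect.
  apply: (@ext_le_l _ _ _ _ [:: q; W; T (z g)]) => s' [dq [dW [dz _]]] dv dcz.
  rewrite Tscale //.
  have hz := Tpos (zpos g) dz.
  have : 0 <= c * Tf (z g) s' by apply: mulr_ge0 => //; lra.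
  have [Os|nOs] := pselect (O s').
    have := hq s' dq (conj dz (conj (conj dW I) I)) => /=.
    have := vle s' dv dq; case: Os => _ hWc.
    by case: (lerP (sfun W s' - c) 0) => h; case: (lerP (sfun q s') 0) => h'; lra.
  by have := vout s' dv nOs; lra.
have c0 : 0 < c by lra.
have Hg' : forall g, vl_le (c^-1 *: v) (z g).
  move=> g; apply: (@vl_le_scale_inv _ _ c) => //.
  by rewrite scalerA mulfV ?gt_eqF // scale1r; exact: Hg.
have := zinf _ Hg' => /= h.
apply: vn0; apply: vl_le_anti v0.
have := vl_le_scale (ltW c0) h.
by rewrite scalerA mulfV ?gt_eqF // scale1r scaler0.
Qed.
End TL.


Unset Implicit Arguments.

Theorem lemma3p2 (R : realType) (E : VectorLattice R) (u : E)
  (X : topologicalType) (T : E -> SX R X) :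
  archimedean_vl E -> weak_unit u ->
  compact [set: X] -> hausdorff_space X ->
  lattice_hom T -> sx_injective T ->
  sx_eq (T u) (sx_cst X 1) ->
  (forall f : SX R X, in_sup_closure (T @` ideal_gen u) f <-> in_CX f) ->
  [/\ (* T is order continuous *)
      (forall (A : Type) (leA : A -> A -> Prop) (x : A -> E),
         directed leA -> ocvg (S := VL_OSig E) leA x 0 ->
         ocvg (S := SX_OSig R X) leA (fun a => T (x a)) (sx_cst X 0)),
      (* T is uo-continuous *)
      (forall (A : Type) (leA : A -> A -> Prop) (x : A -> E) (l : E),
         directed leA -> uocvg (S := VL_OSig E) leA x l ->
         uocvg (S := SX_OSig R X) leA (fun a => T (x a)) (T l)) &
      (* T^-1 : T(E) -> E is uo-continuous *)
      (forall (A : Type) (leA : A -> A -> Prop) (x : A -> E) (l : E),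
         directed leA -> uocvg (S := SX_OSig R X) leA (fun a => T (x a)) (T l) ->
         uocvg (S := VL_OSig E) leA x l)].
Proof.
move=> Harch [Hu0 _] Hcomp Hhaus Hhom Hinj Hu Hcl; split.
- exact: (part1 Hhom Hinj Hu Hcl Hcomp Hhaus).
- exact: (part2 Hhom Hinj Hu Hcl Hcomp Hhaus Hu0).
- exact: (part3 Hhom Hinj Hu Hcl Hcomp Hhaus Harch).
Qed.
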